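(* Let $X,Y,P$ be Banach spaces, $H:X\times P\rightrightarrows Y$ a set-valued map and $(\overline{x},\overline{p},0)\in\operatorname{Gr}H$. Define $S:P\rightrightarrows X$ by $S(p)=\{x\in X: 0\in H(x,p)\}$, and suppose $H$ is inner semicontinuous at $((\overline{x},\overline{p}),0)$. (i) If $H$ is open with linear rate $c>0$ with respect to $x$ uniformly in $p$ around $((\overline{x},\overline{p}),0)$, then there exist $\overline{r},\overline{t}>0$ such that for every $(x,p)\in B(\overline{x},\overline{r})\times B(\overline{p},\overline{t})$, \[ d(x,S(p))\le c^{-1}d(0,H(x,p)). \] If moreover $H$ is Lipschitz-like with respect to $p$ uniformly in $x$ around $((\overline{x},\overline{p}),0)$, then $S$ is Lipschitz-like around $(\overline{p},\overline{x})$ and \[ \operatorname{lip}S(\overline{p},\overline{x})\le c^{-1}\,\widehat{\operatorname{lip}}_pH((\overline{x},\overline{p}),0). \] (ii) If $H$ is open with linear rate $c>0$ with respect to $p$ uniformly in $x$ around $((\overline{x},\overline{p}),0)$, then there exist $\overline{r},\overline{t}>0$ such that for every $(x,p)\in B(\overline{x},\overline{r})\times B(\overline{p},\overline{t})$, \[ d(p,S^{-1}(x))\le c^{-1}d(0,H(x,p)). \] If moreover $H$ is Lipschitz-like with respect to $x$ uniformly in $p$ around $((\overline{x},\overline{p}),0)$, then $S$ is metrically regular around $(\overline{p},\overline{x})$ and \[ \operatorname{reg}S(\overline{p},\overline{x})\le c^{-1}\,\widehat{\operatorname{lip}}_xH((\overline{x},\overline{p}),0). \]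
   Context: $B(x,r)$ open ball, $\mathbb{D}_Y$ closed unit ball of $Y$, $d(x,A)=\inf_{a\in A}\|x-a\|$ with $d(x,\emptyset)=\infty$. Product spaces carry the sum norm. $H$ is inner semicontinuous at $((\overline{x},\overline{p}),0)$ if for every open $D\ni 0$ there is a neighborhood $U$ of $(\overline{x},\overline{p})$ with $H(x,p)\cap D\neq\emptyset$ for all $(x,p)\in U$. Write $H_p=H(\cdot,p)$, $H_x=H(x,\cdot)$. $H$ is open with linear rate $c$ with respect to $x$ uniformly in $p$ around $((\overline{x},\overline{p}),\overline{y})$ if there exist $\varepsilon>0$ and neighborhoods $U$ of $\overline{x}$, $V$ of $\overline{p}$, $W$ of $\overline{y}$ such that for every $\rho\in]0,\varepsilon[$, $p\in V$ and $(x,y)\in\operatorname{Gr}H_p\cap(U\times W)$: $B(y,\rho c)\subset H_p(B(x,\rho))$. $H$ is Lipschitz-like with respect to $x$ uniformly in $p$ around $((\overline{x},\overline{p}),\overline{y})$ with constant $L$ if there are such neighborhoods with $H_p(x)\cap W\subset H_p(u)+L\|x-u\|\mathbb{D}_Y$ for all $x,u\in U$, $p\in V$; $\widehat{\operatorname{lip}}_xH((\overline{x},\overline{p}),\overline{y})$ is the infimum of such $L$. The notions ''with respect to $p$ uniformly in $x$'' (and $\widehat{\operatorname{lip}}_p$) are defined symmetrically, exchanging the roles of $x$ and $p$. A multifunction $T:A\rightrightarrows B$ is Lipschitz-like around $(\overline{a},\overline{b})\in\operatorname{Gr}T$ with constant $L$ if there are neighborhoods $U$ of $\overline{a}$, $V$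 of $\overline{b}$ with $T(a)\cap V\subset T(u)+L\|a-u\|\mathbb{D}_B$ for all $a,u\in U$; $\operatorname{lip}T(\overline{a},\overline{b})$ is the infimum of such $L$. $T$ is metrically regular around $(\overline{a},\overline{b})$ with constant $L$ if there are neighborhoods $U,V$ with $d(a,T^{-1}(b))\le L\,d(b,T(a))$ for all $(a,b)\in U\times V$; $\operatorname{reg}T(\overline{a},\overline{b})$ is the infimum of such $L$. *)

(* Defs.v *)
From HB Require Import structures.
From mathcomp Require Import all_boot all_order all_algebra.
From mathcomp Require Import all_classical all_reals all_analysis.
Set Implicit Arguments. Unset Strict Implicit. Unset Printing Implicit Defensive.
Import Order.TTheory GRing.Theory Num.Theory.
Import numFieldNormedType.Exports.
Local Open Scope classical_set_scope.
Local Open Scope ring_scope.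

Section Defs.
Variable R : realType.

Definition mf_ball (V : normedModType R) (x : V) (r : R) : set V :=
  [set y | `|x - y| < r].

(* d(x,A) = inf_{a in A} ||x - a||, with d(x, emptyset) = +oo *)
Definition mf_dist (V : normedModType R) (x : V) (A : set V) : \bar R :=
  ereal_inf [set (`|x - a|)%:E | a in A].

Variables (X Y P : normedModType R).

Definition inner_semicont (H : X -> P -> set Y) (xb : X) (pb : P) (yb : Y) :=
  forall D : set Y, open D -> D yb ->
    exists U : set (X * P), nbhs (xb, pb) U /\
      forall x p, U (x, p) -> H x p `&` D !=set0.

Definition open_rate_x (H : X -> P -> set Y) (xb : X) (pb : P) (yb : Y) (c : R) :=
  exists eps : R, 0 < eps /\
  exists U V W, nbhs xb U /\ nbhs pb V /\ nbhs yb W /\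
    forall rho p x y, 0 < rho -> rho < eps -> V p -> U x -> W y -> H x p y ->
      mf_ball y (rho * c) `<=` [set y' | exists2 x', mf_ball x rho x' & H x' p y'].

Definition open_rate_p (H : X -> P -> set Y) (xb : X) (pb : P) (yb : Y) (c : R) :=
  exists eps : R, 0 < eps /\
  exists U V W, nbhs xb U /\ nbhs pb V /\ nbhs yb W /\
    forall rho x p y, 0 < rho -> rho < eps -> U x -> V p -> W y -> H x p y ->
      mf_ball y (rho * c) `<=` [set y' | exists2 p', mf_ball p rho p' & H x p' y'].

Definition liplike_x (H : X -> P -> set Y) (xb : X) (pb : P) (yb : Y) (L : R) :=
  0 <= L /\
  exists U V W, nbhs xb U /\ nbhs pb V /\ nbhs yb W /\
    forall x u p, U x -> U u -> V p ->
      forall y, H x p y -> W y ->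
        exists2 y', H u p y' & `|y - y'| <= L * `|x - u|.

Definition liplike_p (H : X -> P -> set Y) (xb : X) (pb : P) (yb : Y) (L : R) :=
  0 <= L /\
  exists U V W, nbhs xb U /\ nbhs pb V /\ nbhs yb W /\
    forall p q x, V p -> V q -> U x ->
      forall y, H x p y -> W y ->
        exists2 y', H x q y' & `|y - y'| <= L * `|p - q|.

Definition lip_hat_x H xb pb yb : \bar R :=
  ereal_inf [set L%:E | L in liplike_x H xb pb yb].
Definition lip_hat_p H xb pb yb : \bar R :=
  ereal_inf [set L%:E | L in liplike_p H xb pb yb].

End Defs.

Section Single.
Variable R : realType.
Variables (A B : normedModType R).

Definition liplike (T : A -> set B) (ab : A) (bb : B) (L : R) :=
  0 <= L /\
  exists U V, nbhs ab U /\ nbhs bb V /\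
    forall a u, U a -> U u -> forall b, T a b -> V b ->
      exists2 b', T u b' & `|b - b'| <= L * `|a - u|.

Definition lip (T : A -> set B) ab bb : \bar R :=
  ereal_inf [set L%:E | L in liplike T ab bb].

Definition inv_mf (T : A -> set B) : B -> set A := fun b => [set a | T a b].

Definition metreg (T : A -> set B) (ab : A) (bb : B) (L : R) :=
  0 <= L /\
  exists U V, nbhs ab U /\ nbhs bb V /\
    forall a b, U a -> V b ->
      (mf_dist a (inv_mf T b) <= L%:E * mf_dist b (T a))%E.

Definition reg (T : A -> set B) ab bb : \bar R :=
  ereal_inf [set L%:E | L in metreg T ab bb].

End Single.

Definition solmap (R : realType) (X Y P : normedModType R) (H : X -> P -> set Y)
  : P -> set X := fun p => [set x | H x p 0].

(* Main.v *)
Require Import Defs.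
From HB Require Import structures.
From mathcomp Require Import all_boot all_order all_algebra.
From mathcomp Require Import all_classical all_reals all_analysis.
From mathcomp Require Import lra.
Import Order.TTheory GRing.Theory Num.Theory.
Import numFieldNormedType.Exports.
Local Open Scope classical_set_scope.
Local Open Scope ring_scope.
Set Implicit Arguments. Unset Strict Implicit.

Lemma le_kinf (R : realType) (x : \bar R) (k : R) (E : set \bar R) :
  0 < k -> (forall z, E z -> (x <= k%:E * z)%E) -> (x <= k%:E * ereal_inf E)%E.
Proof.
move=> k0 h.
have -> : k = (k^-1)^-1 by rewrite invrK.
rewrite lee_pdivlMl ?invr_gt0 //; apply/ereal_infP => z Ez.
by rewrite lee_pdivrMl // h.
Qed.

Lemma le_eps (R : realType) (x : \bar R) (z k : R) : 0 < k ->
  (forall e, 0 < e -> e < k -> (x <= (z + e)%:E)%E) -> (x <= z%:E)%E.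
Proof.
move=> k0 h; apply/lee_addgt0Pr => e e0.
have m0 : 0 < Order.min e (k/2) by rewrite lt_min e0 divr_gt0.
apply: le_trans (h _ m0 _) _.
  by rewrite gt_min ltr_pdivrMr // ltr_pMr // ltr1n orbT.
by rewrite lee_fin lerD2l ge_min lexx.
Qed.

Definition OpenB (R : realType) (A B Y : normedModType R) (G : A -> B -> set Y)
  (ab : A) (bb : B) (c : R) :=
  exists eps rA rB rW : R, [/\ 0 < eps, 0 < rA, 0 < rB, 0 < rW &
   forall rho a b y, 0 < rho -> rho < eps -> `|ab - a| < rA -> `|bb - b| < rB ->
     `|y| < rW -> G a b y ->
     forall y', `|y - y'| < rho * c -> exists2 a', `|a - a'| < rho & G a' b y'].

Definition InnerB (R : realType) (A B Y : normedModType R) (G : A -> B -> set Y)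
  (ab : A) (bb : B) :=
  forall d : R, 0 < d -> exists2 r : R, 0 < r &
    forall a b, `|ab - a| < r -> `|bb - b| < r -> exists2 y, G a b y & `|y| < d.

Lemma dist_le (R : realType) (A : normedModType R) (a a' : A) (S : set A) :
  S a' -> (mf_dist a S <= (`|a - a'|)%:E)%E.
Proof. by move=> Sa; apply: ge_ereal_inf; exists (`|a - a'|)%:E => //; exists a'. Qed.

Lemma pt (R : realType) (A B Y : normedModType R) (G : A -> B -> set Y)
  (ab : A) (bb : B) (c eps rA rB rW : R) : 0 < c -> 0 < eps ->
  (forall rho a b y, 0 < rho -> rho < eps -> `|ab - a| < rA -> `|bb - b| < rB ->
     `|y| < rW -> G a b y ->
     forall y', `|y - y'| < rho * c -> exists2 a', `|a - a'| < rho & G a' b y') ->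
  forall a b y, `|ab - a| < rA -> `|bb - b| < rB -> `|y| < rW -> `|y| < c * eps ->
  G a b y -> (mf_dist a [set a' | G a' b (0%R:Y)] <= (c^-1 * `|y|)%:E)%E.
Proof.
move=> c0 eps0 hO a b y ha hb hy hy2 Gy.
have k0 : 0 < eps - c^-1 * `|y|.
  by rewrite subr_gt0 mulrC ltr_pdivrMr // mulrC.
apply: (le_eps k0) => e e0 ek.
have rho0 : 0 < c^-1 * `|y| + e by rewrite ltr_wpDl // mulr_ge0 // invr_ge0 ltW.
have rhoe : c^-1 * `|y| + e < eps by rewrite -ltrBrDl.
have [|a' ha' Ga'] := hO _ a b y rho0 rhoe ha hb hy Gy 0.
  rewrite subr0 mulrDl mulrAC mulVf ?gt_eqF // mul1r ltrDl mulr_gt0 //.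
apply: le_trans (dist_le a Ga') _.
by rewrite lee_fin ltW.
Qed.

Lemma dist_est (R : realType) (A B Y : normedModType R) (G : A -> B -> set Y)
  (ab : A) (bb : B) (c : R) : 0 < c -> OpenB G ab bb c -> InnerB G ab bb ->
  exists2 r : R, 0 < r & forall a b, `|ab - a| < r -> `|bb - b| < r ->
   (mf_dist a [set a' | G a' b (0%R:Y)] <= c^-1%:E * mf_dist (0%R : Y) (G a b))%E.
Proof.
move=> c0 [eps [rA [rB [rW [eps0 rA0 rB0 rW0 hO]]]]] hI.
have d0 : 0 < Order.min rW (c * eps) by rewrite lt_min rW0 mulr_gt0.
have [r1 r10 hr1] := hI _ d0.
exists (Order.min (Order.min rA rB) r1); first by rewrite !lt_min rA0 rB0 r10.
move=> a b; rewrite !lt_min => /andP[/andP[ha _] ha1] /andP[/andP[_ hb] hb1].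
apply: le_kinf; first by rewrite invr_gt0.
move=> _ [y Gy <-]; rewrite sub0r normrN.
have hpt := pt c0 eps0 hO ha hb.
case: (ltP `|y| (Order.min rW (c * eps))) => hy.
  move: (hy); rewrite lt_min => /andP[hy1 hy2].
  by rewrite -EFinM; apply: hpt.
have [y0 Gy0 hy0] := hr1 _ _ ha1 hb1.
move: (hy0); rewrite lt_min => /andP[hy1 hy2].
apply: le_trans (hpt _ hy1 hy2 Gy0) _.
rewrite -EFinM lee_fin ler_wpM2l ?invr_ge0 ?ltW //.
exact: lt_le_trans hy0 hy.
Qed.

Definition LipB (R : realType) (A B Y : normedModType R) (G : A -> B -> set Y)
  (ab : A) (bb : B) (L : R) :=
  0 <= L /\ exists rA rB rW : R, [/\ 0 < rA, 0 < rB, 0 < rW &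
    forall b b' a, `|bb - b| < rB -> `|bb - b'| < rB -> `|ab - a| < rA ->
      forall y, G a b y -> `|y| < rW ->
        exists2 y', G a b' y' & `|y - y'| <= L * `|b - b'|].

Lemma ballE (R : realType) (A : normedModType R) (x y : A) (r : R) :
  ball x r y = (`|x - y| < r).
Proof. by rewrite -ball_normE. Qed.

Lemma nbhsB (R : realType) (A : normedModType R) (x : A) (r : R) :
  0 < r -> nbhs x [set y | `|x - y| < r].
Proof.
move=> r0; have := nbhsx_ballx x r r0; apply: filterS => y.
by rewrite ballE.
Qed.

Lemma tri (R : realType) (A : normedModType R) (x b b' : A) :
  `|b - b'| <= `|x - b| + `|x - b'|.
Proof.
have -> : b - b' = (x - b') - (x - b) by rewrite opprB [RHS]addrC [RHS]addrA subrK.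
by rewrite [X in _ <= X]addrC ler_normB.
Qed.

Lemma lip_part (R : realType) (A B Y : normedModType R) (G : A -> B -> set Y)
  (ab : A) (bb : B) (c L L' : R) : 0 < c -> OpenB G ab bb c -> LipB G ab bb L ->
  L / c < L' -> liplike (fun b => [set a | G a b 0]) bb ab L'.
Proof.
move=> c0 [eps [rA [rB [rW [eps0 rA0 rB0 rW0 hO]]]]]
  [L0 [rAl [rBl [rWl [rAl0 rBl0 rWl0 hL]]]]] hL'.
have L'0 : 0 < L' by apply: le_lt_trans hL'; rewrite divr_ge0 // ltW.
have cL : L < L' * c by rewrite -ltr_pdivrMr.
set tE := eps / (2 * L' + 2).
set tW := rW / (2 * L + 2).
have tE0 : 0 < tE by rewrite divr_gt0 //; lra.
have tW0 : 0 < tW by rewrite divr_gt0 //; lra.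
have tE1 : tE * (2 * L' + 2) <= eps by rewrite /tE divfK //; lra.
have tW1 : tW * (2 * L + 2) <= rW by rewrite /tW divfK //; lra.
set t := Order.min (Order.min rB rBl) (Order.min tE tW).
have t0 : 0 < t by rewrite !lt_min rB0 rBl0 tE0 tW0.
set s := Order.min rA rAl.
have s0 : 0 < s by rewrite lt_min rA0 rAl0.
split; first exact: ltW.
exists [set b | `|bb - b| < t], [set a | `|ab - a| < s].
split; first exact: nbhsB.
split; first exact: nbhsB.
have tlE : t <= tE by rewrite /t !ge_min lexx ?orbT ?orTb.
have tlW : t <= tW by rewrite /t !ge_min lexx ?orbT ?orTb.
have tlB : t <= rB by rewrite /t !ge_min lexx ?orbT ?orTb.
have tlBl : t <= rBl by rewrite /t !ge_min lexx ?orbT ?orTb.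
move=> b b' /= hb hb' a Ga ha.
have hb1 := lt_le_trans hb tlB; have hb2 := lt_le_trans hb tlBl.
have hb1' := lt_le_trans hb' tlB; have hb2' := lt_le_trans hb' tlBl.
have ha1 : `|ab - a| < rA by apply: lt_le_trans ha _; rewrite ge_min lexx.
have ha2 : `|ab - a| < rAl by apply: lt_le_trans ha _; rewrite ge_min lexx orbT.
have [|y' Gy' hy'] := hL b b' a hb2 hb2' ha2 0 Ga; first by rewrite normr0.
rewrite sub0r normrN in hy'.
have nb : `|b - b'| < 2 * t.
  apply: le_lt_trans (tri bb b b') _; lra.
have [y0|y'0] := eqVneq y' 0.
  by rewrite y0 in Gy'; exists a => //; rewrite subrr normr0 mulr_ge0 // ltW.
have ny'0 : 0 < `|y'| by rewrite normr_gt0.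
have nbpos : 0 < `|b - b'|.
  rewrite lt_neqAle normr_ge0 andbT eq_sym; apply/negP => /eqP e.
  by move: (lt_le_trans ny'0 hy'); rewrite e mulr0 ltxx.
have rho0 : 0 < L' * `|b - b'| by rewrite mulr_gt0.
have rhoE : L' * `|b - b'| < eps.
  have : t * (2 * L' + 2) <= eps.
    apply: le_trans tE1; rewrite ler_wpM2r //; lra.
  nra.
have hyW : `|y'| < rW.
  apply: le_lt_trans hy' _.
  have : t * (2 * L + 2) <= rW.
    apply: le_trans tW1; rewrite ler_wpM2r //; lra.
  nra.
have [|a' ha' Ga'] := hO _ a b' y' rho0 rhoE ha1 hb1' hyW Gy' 0.
  rewrite subr0; apply: le_lt_trans hy' _; rewrite mulrAC; nra.
by exists a' => //; apply: ltW.
Qed.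

Lemma metreg_part (R : realType) (A B Y : normedModType R) (G : A -> B -> set Y)
  (ab : A) (bb : B) (c L L' : R) : 0 < c -> OpenB G ab bb c -> InnerB G ab bb ->
  LipB G ab bb L -> L / c < L' -> metreg (fun a => [set b | G a b 0]) ab bb L'.
Proof.
move=> c0 hO hI [L0 [rAl [rBl [rWl [rAl0 rBl0 rWl0 hL]]]]] hL'.
have L'0 : 0 < L' by apply: le_lt_trans hL'; rewrite divr_ge0 // ltW.
have cL : L / c <= L' by apply: ltW.
have [r0 r00 hD] := dist_est c0 hO hI.
have d0 : 0 < c * L' * (rBl / 2) by rewrite !mulr_gt0 // invr_gt0.
have [r1 r10 hr1] := hI _ d0.
set ra := Order.min (Order.min r0 rAl) r1.
set rb := Order.min (Order.min r0 (rBl / 2)) r1.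
have ra0 : 0 < ra by rewrite !lt_min r00 rAl0 r10.
have rb0 : 0 < rb by rewrite !lt_min r00 r10 divr_gt0.
split; first exact: ltW.
exists [set a | `|ab - a| < ra], [set b | `|bb - b| < rb].
split; first exact: nbhsB.
split; first exact: nbhsB.
move=> a b /= ha hb.
have ha0 : `|ab - a| < r0 by apply: lt_le_trans ha _; rewrite /ra !ge_min lexx ?orbT ?orTb.
have ha1 : `|ab - a| < rAl by apply: lt_le_trans ha _; rewrite /ra !ge_min lexx ?orbT ?orTb.
have ha2 : `|ab - a| < r1 by apply: lt_le_trans ha _; rewrite /ra !ge_min lexx ?orbT ?orTb.
have hb0 : `|bb - b| < r0 by apply: lt_le_trans hb _; rewrite /rb !ge_min lexx ?orbT ?orTb.
have hb1 : `|bb - b| < rBl / 2 by apply: lt_le_trans hb _; rewrite /rb !ge_min lexx ?orbT ?orTb.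
have hb2 : `|bb - b| < r1 by apply: lt_le_trans hb _; rewrite /rb !ge_min lexx ?orbT ?orTb.
have hDab := hD a b ha0 hb0.
apply: le_kinf => // _ [b' Gb' <-].

case: (ltP `|bb - b'| rBl) => hb'.
  have hbl : `|bb - b| < rBl by apply: lt_le_trans hb1 _; rewrite ler_pdivrMr //; lra.
  have [|y' Gy' hy'] := hL b' b a hb' hbl ha1 0 Gb'; first by rewrite normr0.
  apply: le_trans hDab _.
  apply: le_trans (lee_wpmul2l _ (dist_le 0 Gy')) _; first by rewrite lee_fin invr_ge0 ltW.
  rewrite -!EFinM lee_fin.
  apply: (le_trans (ler_wpM2l _ hy')); first by rewrite invr_ge0 ltW.
  by rewrite distrC mulrA ler_wpM2r // mulrC.
have [y Gy hy] := hr1 _ _ ha2 hb2.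
apply: le_trans hDab _.
apply: le_trans (lee_wpmul2l _ (dist_le 0 Gy)) _; first by rewrite lee_fin invr_ge0 ltW.
rewrite -!EFinM lee_fin sub0r normrN.
have nbb : rBl / 2 <= `|b - b'|.
  have := tri b bb b'; have := distrC b bb; lra.
have : c^-1 * `|y| <= L' * (rBl / 2).
  by rewrite ler_pdivrMl // !mulrA -(mulrA (c * L')); exact: ltW.
move=> h; apply: le_trans h _; apply: ler_wpM2l => //; exact: ltW.
Qed.

Lemma nbr (R : realType) (A : normedModType R) (x : A) (U : set A) :
  nbhs x U -> exists2 r : R, 0 < r & forall y, `|x - y| < r -> U y.
Proof.
move=> /nbhs_ballP [r r0 hr]; exists r => // y hy; apply: hr.
by rewrite ballE.
Qed.

Lemma openx (R : realType) (X Y P : normedModType R) (H : X -> P -> set Y)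
  xb pb c : open_rate_x H xb pb 0 c -> OpenB H xb pb c.
Proof.
move=> [eps [eps0 [U [V [W [/nbr [rA rA0 hU] [/nbr [rB rB0 hV] [/nbr [rW rW0 hW] h]]]]]]]].
exists eps, rA, rB, rW; split => // rho a b y r0 re ha hb hy Hy y' hy'.
have hWy : W y by apply: hW; rewrite sub0r normrN.
have := h rho b a y r0 re (hV _ hb) (hU _ ha) hWy Hy y' hy'.
by case=> x' hx' Hx'; exists x'.
Qed.

Lemma openp (R : realType) (X Y P : normedModType R) (H : X -> P -> set Y)
  xb pb c : open_rate_p H xb pb 0 c -> OpenB (fun p x => H x p) pb xb c.
Proof.
move=> [eps [eps0 [U [V [W [/nbr [rA rA0 hU] [/nbr [rB rB0 hV] [/nbr [rW rW0 hW] h]]]]]]]].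
exists eps, rB, rA, rW; split => // rho a b y r0 re ha hb hy Hy y' hy'.
have hWy : W y by apply: hW; rewrite sub0r normrN.
have := h rho b a y r0 re (hU _ hb) (hV _ ha) hWy Hy y' hy'.
by case=> x' hx' Hx'; exists x'.
Qed.

Lemma innerxp (R : realType) (X Y P : normedModType R) (H : X -> P -> set Y)
  xb pb : inner_semicont H xb pb 0 ->
  forall d : R, 0 < d -> exists2 r : R, 0 < r &
    forall x p, `|xb - x| < r -> `|pb - p| < r -> exists2 y, H x p y & `|y| < d.
Proof.
move=> hI d d0.
have [|U [/nbhs_ballP [r r0 hr] hU]] := hI (ball 0 d) (ball_open _ _).
  by rewrite ballE subrr normr0.
exists r => // x p hx hp.
have [|y [Hy]] := hU x p; first by apply: hr; split; rewrite ballE.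
by rewrite ballE sub0r normrN; exists y.
Qed.

Lemma lipp (R : realType) (X Y P : normedModType R) (H : X -> P -> set Y)
  xb pb L : liplike_p H xb pb 0 L -> LipB H xb pb L.
Proof.
move=> [L0 [U [V [W [/nbr [rA rA0 hU] [/nbr [rB rB0 hV] [/nbr [rW rW0 hW] h]]]]]]].
split => //; exists rA, rB, rW; split => // b b' a hb hb' ha y Hy hy.
apply: (h b b' a (hV _ hb) (hV _ hb') (hU _ ha) y Hy).
by apply: hW; rewrite sub0r normrN.
Qed.

Lemma lipx (R : realType) (X Y P : normedModType R) (H : X -> P -> set Y)
  xb pb L : liplike_x H xb pb 0 L -> LipB (fun p x => H x p) pb xb L.
Proof.
move=> [L0 [U [V [W [/nbr [rA rA0 hU] [/nbr [rB rB0 hV] [/nbr [rW rW0 hW] h]]]]]]].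
split => //; exists rB, rA, rW; split => // b b' a hb hb' ha y Hy hy.
apply: (h b b' a (hU _ hb) (hU _ hb') (hV _ ha) y Hy).
by apply: hW; rewrite sub0r normrN.
Qed.

Theorem theorem3p6 (R : realType) (X Y P : completeNormedModType R)
  (H : X -> P -> set Y) (xb : X) (pb : P) :
  H xb pb 0 ->
  inner_semicont H xb pb 0 ->
  (forall c : R, 0 < c -> open_rate_x H xb pb 0 c ->
     (exists rb tb : R, 0 < rb /\ 0 < tb /\
        forall x p, mf_ball xb rb x -> mf_ball pb tb p ->
          (mf_dist x (solmap H p) <= c^-1%:E * mf_dist (0%R : Y) (H x p))%E)
     /\ ((exists L, liplike_p H xb pb 0 L) ->
          (exists L, liplike (solmap H) pb xb L) /\
          (lip (solmap H) pb xb <= c^-1%:E * lip_hat_p H xb pb 0%R)%E))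
  /\
  (forall c : R, 0 < c -> open_rate_p H xb pb 0 c ->
     (exists rb tb : R, 0 < rb /\ 0 < tb /\
        forall x p, mf_ball xb rb x -> mf_ball pb tb p ->
          (mf_dist p (inv_mf (solmap H) x) <= c^-1%:E * mf_dist (0%R : Y) (H x p))%E)
     /\ ((exists L, liplike_x H xb pb 0 L) ->
          (exists L, metreg (solmap H) pb xb L) /\
          (reg (solmap H) pb xb <= c^-1%:E * lip_hat_x H xb pb 0%R)%E)).
Proof.
move=> _ hI.
have hIx : InnerB H xb pb by move=> d d0; exact: innerxp hI d d0.
have hIp : InnerB (fun p x => H x p) pb xb.
  move=> d d0; have [r r0 h] := innerxp hI d0.
  by exists r => // p x hp hx; apply: h.
split=> c c0 hO.
  have hOB := openx hO.
  split.
    have [r r0 h] := dist_est c0 hOB hIx.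
    by exists r, r; do 2 split => //; move=> x p hx hp; apply: h.
  move=> [L0 hL0].
  have lp : forall L, liplike_p H xb pb 0 L -> forall L', L / c < L' ->
      liplike (solmap H) pb xb L'.
    by move=> L hL L' hL'; apply: (lip_part c0 hOB (lipp hL) hL').
  split.
    exists (L0 / c + 1); apply: (lp _ hL0); lra.
  apply: le_kinf; first by rewrite invr_gt0.
  move=> _ [L hL <-]; rewrite -EFinM.
  apply: (@le_eps _ _ _ 1) => // e e0 _.
  apply: ge_ereal_inf; exists (c^-1 * L + e)%:E => //.
  exists (c^-1 * L + e) => //; apply: (lp _ hL).
  by rewrite mulrC ltrDl.
have hOB := openp hO.
split.
  have [r r0 h] := dist_est c0 hOB hIp.
  by exists r, r; do 2 split => //; move=> x p hx hp; apply: h.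
move=> [L0 hL0].
have lp : forall L, liplike_x H xb pb 0 L -> forall L', L / c < L' ->
    metreg (solmap H) pb xb L'.
  by move=> L hL L' hL'; apply: (metreg_part c0 hOB hIp (lipx hL) hL').
split.
  exists (L0 / c + 1); apply: (lp _ hL0); lra.
apply: le_kinf; first by rewrite invr_gt0.
move=> _ [L hL <-]; rewrite -EFinM.
apply: (@le_eps _ _ _ 1) => // e e0 _.
apply: ge_ereal_inf; exists (c^-1 * L + e)%:E => //.
exists (c^-1 * L + e) => //; apply: (lp _ hL).
by rewrite mulrC ltrDl.
Qed.
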